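(* Let $\mathfrak g$ be of type $A_n$. For distinct $i,j\in I$ and every $b\in\mathcal B(\infty)$, $\widetilde f_i\widetilde f_j^\ast(b)=\widetilde f_j^\ast\widetilde f_i(b)$.
   Context: $I=\{1,\dots,n\}$. $\mathcal I=\{(s,t)\in\mathbb Z_{>0}\times I:s+t\le n+1\}$; $\mathcal B(\infty)$ is the set of $b=(b_{s,t})_{(s,t)\in\mathcal I}\in\mathbb Z_{\ge0}^{\mathcal I}$ with $b_{1,k}\ge b_{2,k-1}\ge\dots\ge b_{k,1}$ for $1\le k\le n$. Convention: $b_{s,t}=0$, $\mathbf e_{s,t}=0$ for $(s,t)\notin\mathcal I$. $\partial_{s,t}(b)=b_{s,t}-b_{s,t+1}-b_{s+1,t-1}+b_{s+1,t}$, $\partial^\ast_{s,t}(b)=b_{s-1,t}-b_{s-1,t+1}-b_{s,t-1}+b_{s,t}$. For $i\in I$, $1\le k\le n+1-i$: $\Sigma_k(b)=\sum_{s=k}^{n+1-i}\partial_{s,i}(b)$, $m_i(b)$ the smallest $k$ maximizing $\Sigma_k(b)$, $\widetilde f_i(b)=b+\mathbf e_{m_i(b),i}$. For $j\in I$, $1\le k\le j$: $\Sigma^\ast_k(b)=\sum_{t=1}^k\partial^\ast_{t,j+1-t}(b)$, $m_j^\ast(b)$ the smallest $k$ maximizing $\Sigma^\ast_k(b)$, $\widetilde f_j^\ast(b)=b+\sum_{t=1}^{m_j^\ast(b)}(\mathbf e_{t,j+1-t}-\mathbf e_{t-1,j+1-t})$. *)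

(* Defs.v *)
From mathcomp Require Import all_boot all_order all_algebra.
Set Implicit Arguments. Unset Strict Implicit. Unset Printing Implicit Defensive.
Import Order.TTheory GRing.Theory Num.Theory.
Local Open Scope ring_scope.

(* An element b = (b_{s,t}) is represented as a function nat -> nat -> int,
   with the convention b_{s,t} = 0 for (s,t) outside the index set. *)
Definition arr := nat -> nat -> int.

Definition inI (n s t : nat) : bool := [&& (0 < s)%N, (0 < t)%N & (s + t <= n.+1)%N].

Definition inBinf (n : nat) (b : arr) : Prop :=
  (forall s t, ~~ inI n s t -> b s t = 0) /\
  (forall s t, inI n s t -> 0 <= b s t) /\
  (forall k s, (1 <= k <= n)%N -> (1 <= s < k)%N ->
      b (s.+1) (k - s)%N <= b s (k.+1 - s)%N).

Definition evec (n s t : nat) : arr :=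
  fun s' t' => if (s' == s) && (t' == t) && inI n s t then 1 else 0.

Definition addarr (b c : arr) : arr := fun s t => b s t + c s t.
Definition subarr (b c : arr) : arr := fun s t => b s t - c s t.

Definition partial (b : arr) (s t : nat) : int :=
  b s t - b s t.+1 - b s.+1 t.-1 + b s.+1 t.

Definition partial_star (b : arr) (s t : nat) : int :=
  b s.-1 t - b s.-1 t.+1 - b s t.-1 + b s t.

Definition first_argmax (F : nat -> int) (lo hi : nat) : nat :=
  let s := iota lo (hi.+1 - lo) in
  let M := \big[Num.max/F lo]_(k <- s) F k in
  (lo + find (fun k => F k == M) s)%N.

Definition Sigma (n i : nat) (b : arr) (k : nat) : int :=
  \sum_(k <= s < (n.+1 - i).+1) partial b s i.

Definition m_i (n i : nat) (b : arr) : nat :=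
  first_argmax (Sigma n i b) 1 (n.+1 - i).

Definition f_tilde (n i : nat) (b : arr) : arr :=
  addarr b (evec n (m_i n i b) i).

Definition Sigma_star (j : nat) (b : arr) (k : nat) : int :=
  \sum_(1 <= t < k.+1) partial_star b t (j.+1 - t).

Definition m_star (j : nat) (b : arr) : nat :=
  first_argmax (Sigma_star j b) 1 j.

Definition f_tilde_star (n j : nat) (b : arr) : arr :=
  fun s' t' => b s' t' + \sum_(1 <= t < (m_star j b).+1)
      (evec n t (j.+1 - t) s' t' - evec n t.-1 (j.+1 - t) s' t').

(* Main.v *)
Require Import Defs.
From mathcomp Require Import all_boot all_order all_algebra.
From mathcomp Require Import zify.
From Stdlib Require Import FunctionalExtensionality.
Import Order.TTheory GRing.Theory Num.Theory.
Local Open Scope ring_scope.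

Definition aspec (F : nat -> int) (lo hi k : nat) :=
  [/\ (lo <= k <= hi)%N, (forall x, (lo <= x <= hi)%N -> F x <= F k)
    & (forall x, (lo <= x < k)%N -> F x < F k)].

Lemma bigmax_ge (F : nat -> int) x0 s :
  x0 <= \big[Num.max/x0]_(k <- s) F k /\
  forall x, x \in s -> F x <= \big[Num.max/x0]_(k <- s) F k.
Proof.
elim: s => [|a s [IH1 IH2]]; rewrite ?big_nil ?big_cons; split => //.
- by rewrite le_max IH1 orbT.
- move=> x; rewrite inE => /orP [/eqP->|xs]; first by rewrite le_max lexx.
  by rewrite le_max IH2 ?orbT.
Qed.

Lemma bigmax_mem (F : nat -> int) x0 s :
  \big[Num.max/x0]_(k <- s) F k = x0 \/
  exists2 x, x \in s & \big[Num.max/x0]_(k <- s) F k = F x.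
Proof.
elim: s => [|a s IH]; rewrite ?big_nil ?big_cons; first by left.
case: (lerP (F a) (\big[Num.max/x0]_(k <- s) F k)) => h.
- case: IH => [->|[x xs ->]]; first by left.
  by right; exists x => //; rewrite inE xs orbT.
- right; exists a => //; by rewrite inE eqxx.
Qed.

Lemma argmax_spec F lo hi : (lo <= hi)%N -> aspec F lo hi (first_argmax F lo hi).
Proof.
move=> hlo; rewrite /first_argmax.
set s := iota lo (hi.+1 - lo).
set Mx := \big[Num.max/F lo]_(k <- s) F k.
have mems x : (x \in s) = (lo <= x <= hi)%N.
  by rewrite mem_iota; have -> : (lo + (hi.+1 - lo) = hi.+1)%N by lia.
have [Hx0 Hle] := bigmax_ge F (F lo) s.
have hasM : has (fun k => F k == Mx) s.
  case: (bigmax_mem F (F lo) s) => [E|[x xs E]]; apply/hasP.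
  - by exists lo; [rewrite mems leqnn hlo | rewrite /Mx E].
  - by exists x => //; rewrite /Mx E.
set idx := find _ s.
have hidx : (idx < size s)%N by rewrite -has_find.
have hsz : size s = (hi.+1 - lo)%N by rewrite size_iota.
have hnth : nth lo s idx = (lo + idx)%N by rewrite nth_iota // -hsz.
have := nth_find lo hasM; rewrite -/idx hnth => /eqP FM.
split.
- lia.
- by move=> x hx; rewrite FM; apply: Hle; rewrite mems.
- move=> x hx; rewrite FM lt_neqAle Hle ?mems; last by lia.
  rewrite andbT.
  have hb := before_find lo (a := fun k => F k == Mx) (s := s) (i := (x - lo)%N).
  rewrite nth_iota in hb; last by lia.
  have e : (lo + (x - lo) = x)%N by lia.
  rewrite e in hb; by rewrite hb //; lia.
Qed.

Lemma argmax_uniq F lo hi k1 k2 : aspec F lo hi k1 -> aspec F lo hi k2 -> k1 = k2.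
Proof.
case=> h1 a1 b1 [h2 a2 b2]; case: (ltngtP k1 k2) => // lt.
- have := b2 k1; have := a1 k2; lia.
- have := b1 k2; have := a2 k1; lia.
Qed.

Lemma argmax_eq F lo hi k : aspec F lo hi k -> first_argmax F lo hi = k.
Proof.
move=> hk; have hlo : (lo <= hi)%N by case: hk => ? _ _; lia.
exact: (@argmax_uniq F lo hi _ _ (argmax_spec F lo hi hlo) hk).
Qed.

Lemma argmax_same F G lo hi : (lo <= hi)%N ->
  (forall x, (lo <= x <= hi)%N -> G x = F x) ->
  first_argmax G lo hi = first_argmax F lo hi.
Proof.
move=> hlo E; apply: argmax_eq; case: (argmax_spec F lo hi hlo) => h a b; split => //.
- by move=> x hx; rewrite !E //; apply: a.
- move=> x hx; rewrite !E; first exact: b.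
  all: lia.
Qed.

Definition ind (c : bool) : int := if c then 1 else 0.

Lemma argmax_up F G lo hi c : (lo <= hi)%N ->
  (forall x, (lo <= x <= hi)%N -> G x = F x + ind (x == c)) ->
  first_argmax G lo hi = c \/ first_argmax G lo hi = first_argmax F lo hi.
Proof.
move=> hlo E; set k := first_argmax G lo hi.
case: (eqVneq k c) => [|ne]; [by left | right].
symmetry; apply: argmax_eq; case: (argmax_spec G lo hi hlo) => h a b; split => //.
- move=> x hx; move: (E x hx) (E k h) (a x hx); rewrite /ind (negbTE ne) -/k.
  case: (x == c); lia.
- move=> x hx; have hx' : (lo <= x <= hi)%N by lia.
  move: (E x hx') (E k h) (b x hx); rewrite /ind (negbTE ne) -/k.
  case: (x == c); lia.
Qed.

Lemma argmax_down_other F G lo hi c : (lo <= hi)%N ->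
  (forall x, (lo <= x <= hi)%N -> G x = F x - ind (x == c)) ->
  first_argmax F lo hi != c ->
  first_argmax G lo hi = first_argmax F lo hi.
Proof.
move=> hlo E; set k := first_argmax F lo hi => ne.
apply: argmax_eq; case: (argmax_spec F lo hi hlo) => h a b; split => //.
- move=> x hx; move: (E x hx) (E k h) (a x hx); rewrite /ind (negbTE ne) -/k.
  case: (x == c); lia.
- move=> x hx; have hx' : (lo <= x <= hi)%N by lia.
  move: (E x hx') (E k h) (b x hx); rewrite /ind (negbTE ne) -/k.
  case: (x == c); lia.
Qed.

Lemma argmax_down_self F G lo hi c : (lo <= hi)%N ->
  (forall x, (lo <= x <= hi)%N -> G x = F x - ind (x == c)) ->
  first_argmax F lo hi = c -> (c < hi)%N -> F c <= F c.+1 ->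
  first_argmax G lo hi = c.+1.
Proof.
move=> hlo E hc chi Fc.
case: (argmax_spec F lo hi hlo); rewrite hc => h a b.
have hc1 : (lo <= c.+1 <= hi)%N by lia.
apply: argmax_eq; split => //.
- move=> x hx; move: (E x hx) (E c.+1 hc1) (a x hx); rewrite /ind.
  have -> : (c.+1 == c) = false by lia.
  case: (x == c); lia.
- move=> x hx; have hx' : (lo <= x <= hi)%N by lia.
  move: (E x hx') (E c.+1 hc1) (a x hx'); rewrite /ind.
  have -> : (c.+1 == c) = false by lia.
  case: (ltngtP x c) => [lt|gt|->]; last by lia.
  + have := b x.
    lia.
  + lia.
Qed.

Lemma ind0 : ind false = 0. Proof. by []. Qed.
Lemma ind1 : ind true = 1. Proof. by []. Qed.
Lemma indP (c : bool) : (c /\ ind c = 1) \/ (~~ c /\ ind c = 0).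
Proof. by rewrite /ind; case: c; [left|right]. Qed.
Ltac inds := repeat match goal with
  | |- context [ind ?c] => let h := fresh "h" in have h := indP c; move: h; generalize (ind c); intro end.
Ltac splitind := repeat match goal with
  | |- context [ind ?c] => let E := fresh "E" in case E: c; rewrite ?ind0 ?ind1 end.
Lemma ev n s t s' t' : evec n s t s' t' = ind [&& s' == s, t' == t & inI n s t].
Proof. by rewrite /evec /ind andbA. Qed.

Definition dstar (n j M : nat) : arr := fun s t =>
  \sum_(1 <= t0 < M.+1) (evec n t0 (j.+1 - t0) s t - evec n t0.-1 (j.+1 - t0) s t).

Lemma dstar_cf n j M s t : (M <= j)%N -> (j <= n)%N ->
  dstar n j M s t =
  ind [&& (1 <= s)%N, (s <= M)%N & (s + t == j.+1)%N] -
  ind [&& (1 <= s)%N, (s < M)%N & (s + t == j)%N].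
Proof.
move=> + hj; elim: M => [|M IH] hM.
- rewrite /dstar big_geq //; splitind; lia.
- rewrite /dstar big_nat_recr //=.
  have -> : \sum_(1 <= t0 < M.+1) (evec n t0 (j.+1 - t0) s t - evec n t0.-1 (j.+1 - t0) s t)
     = dstar n j M s t by [].
  rewrite IH; last by lia.
  rewrite !ev /inI; splitind; lia.
Qed.

Lemma partial_add b c s t : partial (addarr b c) s t = partial b s t + partial c s t.
Proof. rewrite /partial /addarr; lia. Qed.

Lemma Sigma_add n i b c k : Sigma n i (addarr b c) k = Sigma n i b k + Sigma n i c k.
Proof. by rewrite /Sigma -big_split; apply: eq_bigr => *; apply: partial_add. Qed.

Lemma partial_star_add b c s t :
  partial_star (addarr b c) s t = partial_star b s t + partial_star c s t.
Proof. rewrite /partial_star /addarr; lia. Qed.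

Lemma Sigma_star_add j b c k :
  Sigma_star j (addarr b c) k = Sigma_star j b k + Sigma_star j c k.
Proof. by rewrite /Sigma_star -big_split; apply: eq_bigr => *; apply: partial_star_add. Qed.

Lemma evI n A i s t : inI n A i -> evec n A i s t = ind ((s == A) && (t == i)).
Proof. by move=> h; rewrite /evec /ind h andbT. Qed.

Lemma E_cf n i j A k r r1 : (1 <= i <= n)%N -> (j <= n)%N ->
  ((r + i = j.+1)%N /\ r1.+1 = r /\ (2 <= r)%N) \/ ((j < i)%N /\ r = 0%N /\ r1 = 0%N) ->
  (1 <= A)%N -> (A + i <= n.+1)%N -> (k <= j)%N ->
  Sigma_star j (evec n A i) k =
  ind ((A == r) && (k == r)) - ind ((A == r1) && (k == r1)).
Proof.
move=> hi hj hr hA1 hA; have hI : inI n A i by rewrite /inI; lia.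
elim: k => [|k IH] hk.
- rewrite /Sigma_star big_geq //; splitind; lia.
- rewrite /Sigma_star big_nat_recr //=.
  have -> : \sum_(1 <= t < k.+1) partial_star (evec n A i) t (j.+1 - t)
     = Sigma_star j (evec n A i) k by [].
  rewrite IH; last by lia.
  have [u hu] : exists u, j = (k + u.+1)%N by exists (j - k.+1)%N; lia.
  subst j.
  have -> : ((k + u.+1).+1 - k.+1 = u.+1)%N by lia.
  rewrite /partial_star !evI //=.
  case: (eqVneq k A) => [eA|nkA].
  + subst A.
    have -> : (k.+1 == k) = false by lia.
    rewrite ?eqxx /= ?ind0; splitind; lia.
  + case: (eqVneq k.+1 A) => [eA|nk1A].
    * subst A; rewrite ?eqxx ?(negbTE nkA) /= ?ind0; splitind; lia.
    * rewrite ?(negbTE nkA) ?(negbTE nk1A) /= ?ind0; splitind; lia.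
Qed.

Ltac simp_ind := repeat match goal with
  | |- context [ind ?c] => first [ (have -> : c = true by lia) | (have -> : c = false by lia) ]
  end; rewrite ?ind0 ?ind1.

Lemma D_cf n i j M k r r1 : (1 <= i <= n)%N -> (j <= n)%N -> (1 <= M <= j)%N ->
  ((r + i = j.+1)%N /\ r1.+1 = r /\ (2 <= r)%N) \/ ((j < i)%N /\ r = 0%N /\ r1 = 0%N) ->
  (1 <= k <= (n.+1 - i).+1)%N ->
  Sigma n i (dstar n j M) k =
  ind ((M == r) && (k == r)) - ind ((M == r1) && (k == r1)).
Proof.
move=> hi hj hM hr hk.
suff H : forall d, (d <= n.+1 - i)%N ->
  Sigma n i (dstar n j M) ((n.+1 - i).+1 - d) =
  ind ((M == r) && (((n.+1 - i).+1 - d)%N == r)) - ind ((M == r1) && (((n.+1 - i).+1 - d)%N == r1)).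
  have := H ((n.+1 - i).+1 - k)%N; have -> : ((n.+1 - i).+1 - ((n.+1 - i).+1 - k) = k)%N by lia.
  by apply; lia.
elim => [|d IH] hd.
- rewrite subn0 /Sigma big_geq //; simp_ind; lia.
- rewrite /Sigma big_ltn; last by lia.
  have -> : (((n.+1 - i).+1 - d.+1).+1 = (n.+1 - i).+1 - d)%N by lia.
  have -> : \sum_((n.+1 - i).+1 - d <= s < (n.+1 - i).+1) partial (dstar n j M) s i
     = Sigma n i (dstar n j M) ((n.+1 - i).+1 - d) by [].
  rewrite IH; last by lia.
  have [k' [hk' hk'N]] : exists k', k' = ((n.+1 - i).+1 - d.+1)%N /\ (1 <= k')%N by exists ((n.+1 - i).+1 - d.+1)%N; split => //; lia.
  have -> : ((n.+1 - i).+1 - d = k'.+1)%N by lia.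
  rewrite -hk' /partial !dstar_cf; try lia.
  have [h|[h|[h|h]]] : (k' + i = j.+1 \/ k' + i = j \/ (k' + i).+1 = j \/
      (k' + i != j.+1 /\ k' + i != j /\ (k' + i).+1 != j))%N by lia.
  all: simp_ind; splitind; lia.
Qed.

Theorem proposition6p11 (n i j : nat) (b : nat -> nat -> int) :
  (1 <= i <= n)%N -> (1 <= j <= n)%N -> i != j -> inBinf n b ->
  f_tilde n i (f_tilde_star n j b) = f_tilde_star n j (f_tilde n i b).
Proof.
move=> hi hj ij _.
have hjn : (j <= n)%N by lia.
set r := (j.+1 - i)%N. set r1 := r.-1.
have hr : ((r + i = j.+1)%N /\ r1.+1 = r /\ (2 <= r)%N) \/ ((j < i)%N /\ r = 0%N /\ r1 = 0%N).
  rewrite /r1 /r; lia.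
have hrN : (r <= n.+1 - i)%N by rewrite /r; lia.
have hrj : (r <= j)%N by rewrite /r; lia.
clearbody r1 r.
have hN : (1 <= n.+1 - i)%N by lia.
have hj1 : (1 <= j)%N by lia.
set A := m_i n i b. set M := m_star j b.
have [hA aA bA] : aspec (Sigma n i b) 1 (n.+1 - i) A := argmax_spec _ _ _ hN.
have [hM aM bM] : aspec (Sigma_star j b) 1 j M := argmax_spec _ _ _ hj1.
change (f_tilde n i (addarr b (dstar n j M)) =
  addarr (f_tilde n i b) (dstar n j (m_star j (f_tilde n i b)))).
rewrite {2}/f_tilde -/A.
set b1 := addarr b (dstar n j M). set b2 := addarr b (evec n A i).
rewrite /f_tilde.
set A' := m_i n i b1. set M' := m_star j b2.
have SA : forall x, (1 <= x <= n.+1 - i)%N -> Sigma n i b1 x =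
    Sigma n i b x + (ind ((M == r) && (x == r)) - ind ((M == r1) && (x == r1))).
  move=> x hx; rewrite /b1 Sigma_add (D_cf n i j M x r r1) //; lia.
have SM : forall x, (1 <= x <= j)%N -> Sigma_star j b2 x =
    Sigma_star j b x + (ind ((A == r) && (x == r)) - ind ((A == r1) && (x == r1))).
  move=> x hx; rewrite /b2 Sigma_star_add (E_cf n i j A x r r1) //; lia.
have F1 : r1.+1 = r -> Sigma n i b r1 = partial b r1 i + Sigma n i b r.
  move=> e; rewrite {1}/Sigma big_ltn; last by lia.
  by rewrite e.
have F2 : r1.+1 = r -> (r + i = j.+1)%N ->
    Sigma_star j b r = Sigma_star j b r1 + partial b r1 i.
  move=> e e2; rewrite /Sigma_star -e big_nat_recr //=.
  have -> : (j.+1 - r1.+1 = i)%N by lia.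
  by [].
have PA : A' = if (M == r1) && (A == r1) then r else A.
  rewrite /A' /m_i.
  case: (eqVneq M r) => [eMr|nMr].
  - have c1 : ((r + i = j.+1)%N /\ r1.+1 = r /\ (2 <= r)%N) by case: hr; lia.
    have -> : (M == r1) = false by lia.
    have up := @argmax_up (Sigma n i b) (Sigma n i b1) 1 (n.+1 - i) r hN.
    case: up => [x hx|hA'r|//].
      rewrite SA // eMr eqxx /=; simp_ind; lia.
    have [_ _ bA'] := argmax_spec (Sigma n i b1) 1 (n.+1 - i) hN.
    rewrite hA'r in bA'.
    have := bA' r1; have := SA r1; have := SA r; have := bM r1.
    have := F1 (proj1 (proj2 c1)); have := F2 (proj1 (proj2 c1)) (proj1 c1).
    rewrite -/M eMr; simp_ind; lia.
  - case: (eqVneq M r1) => [eMr1|nMr1].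
    + have c1 : ((r + i = j.+1)%N /\ r1.+1 = r /\ (2 <= r)%N) by case: hr; lia.
      have hG : forall x, (1 <= x <= n.+1 - i)%N ->
          Sigma n i b1 x = Sigma n i b x - ind (x == r1).
        move=> x hx; rewrite SA // eMr1 eqxx /=; simp_ind; lia.
      case: (eqVneq A r1) => [eAr1|nAr1] /=.
      * rewrite -(proj1 (proj2 c1)).
        apply: (@argmax_down_self (Sigma n i b) (Sigma n i b1) 1 (n.+1 - i) r1 hN hG eAr1); first by lia.
        rewrite (proj1 (proj2 c1)).
        have := aM r; have := F1 (proj1 (proj2 c1)); have := F2 (proj1 (proj2 c1)) (proj1 c1).
        rewrite -/M eMr1; lia.
      * exact: (@argmax_down_other (Sigma n i b) (Sigma n i b1) 1 (n.+1 - i) r1 hN hG nAr1).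
    + rewrite ?(negbTE nMr1) /=.
      apply: argmax_same => // x hx; rewrite SA //; simp_ind; lia.
have PM : M' = if (M == r1) && (A == r1) then r else M.
  rewrite /M' /m_star.
  case: (eqVneq A r) => [eAr|nAr].
  - have c1 : ((r + i = j.+1)%N /\ r1.+1 = r /\ (2 <= r)%N) by case: hr; lia.
    have -> : (A == r1) = false by lia.
    rewrite ?andbF.
    have up := @argmax_up (Sigma_star j b) (Sigma_star j b2) 1 j r hj1.
    case: up => [x hx|hM'r|//].
      rewrite SM // eAr eqxx /=; simp_ind; lia.
    have [_ _ bM'] := argmax_spec (Sigma_star j b2) 1 j hj1.
    rewrite hM'r in bM'.
    have := bM' r1; have := SM r1; have := SM r; have := bA r1.
    have := F1 (proj1 (proj2 c1)); have := F2 (proj1 (proj2 c1)) (proj1 c1).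
    rewrite -/A eAr; simp_ind; lia.
  - case: (eqVneq A r1) => [eAr1|nAr1].
    + have c1 : ((r + i = j.+1)%N /\ r1.+1 = r /\ (2 <= r)%N) by case: hr; lia.
      have hG : forall x, (1 <= x <= j)%N ->
          Sigma_star j b2 x = Sigma_star j b x - ind (x == r1).
        move=> x hx; rewrite SM // eAr1 eqxx /=; simp_ind; lia.
      rewrite ?andbT.
      case: (eqVneq M r1) => [eMr1|nMr1] /=.
      * rewrite -(proj1 (proj2 c1)).
        apply: (@argmax_down_self (Sigma_star j b) (Sigma_star j b2) 1 j r1 hj1 hG eMr1); first by lia.
        rewrite (proj1 (proj2 c1)).
        have := aA r; have := F1 (proj1 (proj2 c1)); have := F2 (proj1 (proj2 c1)) (proj1 c1).
        rewrite -/A eAr1; lia.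
      * exact: (@argmax_down_other (Sigma_star j b) (Sigma_star j b2) 1 j r1 hj1 hG nMr1).
    + rewrite ?(negbTE nAr1) ?andbF /=.
      apply: argmax_same => // x hx; rewrite SM //; simp_ind; lia.
rewrite PA PM.
case E: ((M == r1) && (A == r1)).
- move/andP: E => [/eqP eM /eqP eA].
  have c1 : ((r + i = j.+1)%N /\ r1.+1 = r /\ (2 <= r)%N) by case: hr; lia.
  apply: functional_extensionality => s; apply: functional_extensionality => t.
  rewrite /b1 /b2 /addarr eM eA -(proj1 (proj2 c1)).
  have -> : dstar n j r1.+1 s t = dstar n j r1 s t +
      (evec n r1.+1 (j.+1 - r1.+1) s t - evec n r1 (j.+1 - r1.+1) s t).
    by rewrite /dstar big_nat_recr.
  have -> : (j.+1 - r1.+1 = i)%N by lia.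
  lia.
- apply: functional_extensionality => s; apply: functional_extensionality => t.
  rewrite /b1 /b2 /addarr; lia.
Qed.
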